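(* Let $r\in\mathbb{N}_0$, $s\in\mathbb{N}$, and let $I,J$ be finite sets with $|I|=r$, $|J|=r+s$. Let $n\in\mathbb{N}$ (so $n\ge1$) and $A=(a_{i,j})\in\mathbb{N}_0^{I\times J}$ with $\sum_{j\in J}a_{i,j}\le n$ for all $i\in I$, and suppose exactly $u$ rows of $A$ have exactly one non-zero entry. Then $$\min\{\|\mathbf{v}\|_\infty\mid \mathbf{0}\neq\mathbf{v}\in\ker(A)\cap\mathbb{Z}^J\}\ \le\ \left\lfloor n^{\frac{r-u}{s}}\right\rfloor,$$ where $\ker(A)$ is the kernel of the linear map $\mathbb{Q}^J\to\mathbb{Q}^I$ given by $A$ and $\|\mathbf{v}\|_\infty=\max_j|v_j|$ (in particular, the set on the left is non-empty). *)

(* Defs.v *)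
From HB Require Import structures.
From mathcomp Require Import all_boot all_order all_algebra.
From mathcomp Require Import all_classical all_reals all_analysis.
Set Implicit Arguments. Unset Strict Implicit. Unset Printing Implicit Defensive.

(* Main.v *)
Require Import Defs.
From HB Require Import structures.
From mathcomp Require Import all_boot all_order all_algebra.
From mathcomp Require Import all_classical all_reals all_analysis.
From mathcomp Require Import zify.
Import Order.TTheory GRing.Theory Num.Theory.
Local Open Scope ring_scope.

Lemma lexp2r_nat (m1 m2 e : nat) : (m1 <= m2)%N -> (m1 ^ e <= m2 ^ e)%N.
Proof. by move=> h; elim: e => // e IH; rewrite !expnS leq_mul. Qed.

Theorem lemma5p2 (R : realType) (r s : nat) (I J : finType)
  (hs : (0 < s)%N) (hI : #|I| = r) (hJ : #|J| = (r + s)%N)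
  (n : nat) (hn : (1 <= n)%N) (a : I -> J -> nat)
  (hrow : forall i : I, (\sum_(j : J) a i j <= n)%N)
  (u : nat)
  (hu : #|[set i : I | #|[set j : J | a i j != 0%N]| == 1%N]| = u) :
  exists v : J -> int,
    [/\ exists j : J, v j != 0,
        forall i : I, \sum_(j : J) (a i j)%:Z * v j = 0
      & ((\max_(j : J) `|v j|%N)%:Z
          <= Num.floor ((n%:R : R) `^ ((r%:R - u%:R) / s%:R)))].
Proof.
set x := (n%:R : R) `^ _.
have x0 : 0 <= x by apply: powR_ge0.
set H := `|Num.floor x|%N.
have hfl : Num.floor x = H%:Z by rewrite /H gez0_abs // floor_ge0.
have hur : (u <= r)%N by rewrite -hu -hI max_card.
have key : (n ^ (r - u) < H.+1 ^ s)%N.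
  rewrite -(ltr_nat R) !natrX.
  have -> : (n%:R : R) ^+ (r - u) = x ^+ s.
    rewrite -[RHS]powR_mulrn // /x -powRrM -natrB // divfK ?pnatr_eq0 -?lt0n //.
    by rewrite powR_mulrn.
  rewrite ltrXn2r // -?lt0n //.
  have := floorD1_gt x; rewrite hfl.
  suff -> : ((H%:Z + 1)%:~R : R) = H.+1%:R by [].
  by rewrite (_ : H%:Z + 1 = (H.+1)%:Z) // -addn1 PoszD.
set S := [set i : I | #|[set j : J | a i j != 0%N]| == 1%N].
set K := [set j : J | [exists i in S, a i j != 0%N]].
have [j0 _] : exists j0 : J, true.
  by have /card_gt0P[j0 _] : (0 < #|J|)%N by rewrite hJ; lia.
have hK : (#|K| <= u)%N.
  rewrite -hu.
  pose f := fun i => odflt j0 [pick j | a i j != 0%N].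
  apply: (leq_trans _ (leq_imset_card f S)); apply: subset_leq_card.
  apply/fintype.subsetP => j; rewrite inE => /existsP[i /andP[iS aij]].
  apply/imsetP; exists i => //.
  move: iS; rewrite inE => /cards1P[j' hj'].
  have Hs : forall k, a i k != 0%N -> k = j'.
    by move=> k hk; apply/set1P; rewrite -hj' inE.
  rewrite /f; case: pickP => [k hk|/(_ j)]; last by rewrite aij.
  by rewrite /= (Hs _ aij) (Hs _ hk).
pose J' := {j : J | j \notin K}.
pose I' := {i : I | i \notin S}.
pose ext (y : {ffun J' -> 'I_H.+1}) (j : J) : nat :=
  if insub j is Some j' then nat_of_ord (y j') else 0%N.
have extH : forall y j, (ext y j <= H)%N.
  by move=> y j; rewrite /ext; case: insubP => // j' _ _; rewrite -ltnS.
have sumH : forall y (i : I), (\sum_j a i j * ext y j <= n * H)%N.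
  move=> y i; apply: (@leq_trans ((\sum_j a i j) * H)); last by rewrite leq_mul.
  by rewrite big_distrl /=; apply: leq_sum => j _; rewrite leq_mul.
pose F (y : {ffun J' -> 'I_H.+1}) : {ffun I' -> 'I_(n * H).+1} :=
  [ffun i => inord (\sum_j a (val i) j * ext y j)].
have cJ' : (r + s - u <= #|{: J'}|)%N.
  rewrite card_sig.
  have -> : #|[pred j | j \notin K]| = #|~: K| by apply: eq_card => j; rewrite !inE.
  have := cardsC K; lia.
have cI' : #|{: I'}| = (r - u)%N.
  rewrite card_sig.
  have -> : #|[pred j | j \notin S]| = #|~: S| by apply: eq_card => j; rewrite !inE.
  have := cardsC S; rewrite hI hu; lia.
have /injectivePn [y [z yz Fyz]] : ~~ injectiveb F.
  apply/negP => /injectiveP /leq_card; rewrite !card_ffun !card_ord cI'.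
  apply/negP; rewrite -ltnNge.
  apply: (leq_trans _ (leq_pexp2l (ltn0Sn H) cJ')).
  have hle : ((n * H).+1 <= n * H.+1)%N by nia.
  apply: leq_ltn_trans; first exact: (lexp2r_nat _ _ (r - u) hle).
  rewrite expnMn -addnBAC // addnC expnD ltn_pmul2r ?expn_gt0 //.
exists (fun j => (ext y j)%:Z - (ext z j)%:Z); split.
- have [j' hj'] : exists j', y j' != z j'.
    apply/existsP; apply: contraNT yz => /existsPn Hn.
    by apply/eqP/ffunP => j; apply/eqP; move/negbNE: (Hn j).
  exists (val j'); rewrite /ext valK subr_eq0 eqz_nat.
  exact: hj'.
- move=> i; case: (boolP (i \in S)) => iS.
    apply: big1 => j _.
    have [->|aij] := eqVneq (a i j) 0%N; first by rewrite mul0r.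
    have jK : j \in K by rewrite inE; apply/existsP; exists i; rewrite iS.
    by rewrite /ext insubN ?negbK // subrr mulr0.
  have := congr1 (fun f : {ffun I' -> 'I_(n * H).+1} => nat_of_ord (f (Sub i iS : I'))) Fyz.
  rewrite /= !ffunE /= !inordK ?ltnS ?sumH // => eqs.
  under eq_bigr do rewrite mulrBr -!PoszM.
  rewrite sumrB; under eq_bigr do rewrite -natz.
  under [X in _ - X]eq_bigr do rewrite -natz.
  by rewrite -!natr_sum eqs subrr.
- apply: (@le_trans _ _ H%:Z); last by rewrite -hfl.
  rewrite lez_nat; apply/bigmax_leqP => j _.
  have := extH y j; have := extH z j; lia.
Qed.
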